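(* Let $M$ be a loopless matroid of rank $k$ on a ground set $E$ of size $n$. There is an injective map sending each chain of flats $F_0\subsetneq F_1\subsetneq\cdots\subsetneq F_m$ of $M$ (for any $m\ge0$) to a chain of flats $G_0\subsetneq G_1\subsetneq\cdots\subsetneq G_m$ of the uniform matroid $U_{k,n}$ on $E$, such that $\mathrm{rk}_M(F_j)=\mathrm{rk}_{U_{k,n}}(G_j)$ for all $0\le j\le m$.
   Context: $U_{k,n}$ on the ground set $E$ ($|E|=n$) is the matroid whose bases are all $k$-subsets of $E$. Flats of a matroid are subsets $F$ such that adding any element strictly increases the rank; loopless means every singleton has rank $1$. *)

(* Defs.v *)
From mathcomp Require Import all_boot.
Set Implicit Arguments. Unset Strict Implicit. Unset Printing Implicit Defensive.

Section Matroid.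
Variable E : finType.

Definition is_matroid (I : pred {set E}) : Prop :=
  [/\ I set0,
      (forall A B : {set E}, B \subset A -> I A -> I B) &
      (forall A B : {set E}, I A -> I B -> #|A| < #|B| ->
          exists2 x, x \in B :\: A & I (x |: A))].

Definition rk (I : pred {set E}) (A : {set E}) : nat :=
  \max_(B : {set E} | (B \subset A) && I B) #|B|.

Definition is_flat (I : pred {set E}) (F : {set E}) : bool :=
  [forall x, (x \notin F) ==> (rk I F < rk I (x |: F))].

Definition loopless (I : pred {set E}) : Prop :=
  forall x : E, rk I [set x] = 1.

Definition uniform_indep (k : nat) : pred {set E} :=
  fun A => [exists B : {set E}, (#|B| == k) && (A \subset B)].

Definition flat_chain (I : pred {set E}) (s : seq {set E}) : bool :=
  [&& size s != 0, all (is_flat I) s & sorted (fun A B : {set E} => A \proper B) s].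

End Matroid.

(* Main.v *)
Require Import Defs.
From Stdlib Require ClassicalEpsilon.
From Stdlib Require Import Lia.
From mathcomp Require Import all_boot zify.

Set Implicit Arguments. Unset Strict Implicit. Unset Printing Implicit Defensive.

Section M.
Variable E : finType.

Lemma rk_le_card (J : pred {set E}) (A : {set E}) : rk J A <= #|A|.
Proof. by apply/bigmax_leqP => B /andP[sBA _]; apply: subset_leq_card. Qed.

Lemma rk_mono (J : pred {set E}) (A A' : {set E}) : A \subset A' -> rk J A <= rk J A'.
Proof.
move=> sAA'; rewrite /rk; apply/bigmax_leqP => B /andP[sBA IB].
by apply: (@leq_bigmax_cond _ (fun B : {set E} => (B \subset A') && J B) (fun B : {set E} => #|B|)); rewrite IB andbT (subset_trans sBA).
Qed.

Lemma ext_set m (B : {set E}) : #|B| <= m -> m <= #|E| ->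
  exists2 C : {set E}, B \subset C & #|C| = m.
Proof.
have [t Ht] := ubnP (m - #|B|); elim: t B Ht => // t IH B Ht hB hm.
case: (eqVneq #|B| m) => [<-|ne]; first by exists B.
have lt : #|B| < m by rewrite ltn_neqAle ne hB.
have : B \proper setT by rewrite properEcard subsetT cardsT (leq_trans lt hm).
case/properP => _ [x _ xB].
have h1 : m - #|x |: B| < t by rewrite cardsU1 xB; move: Ht lt; clear; lia.
have h2 : #|x |: B| <= m by rewrite cardsU1 xB.
have [C sC cC] := IH (x |: B) h1 h2 hm.
by exists C => //; apply: subset_trans sC; apply: subsetUr.
Qed.

Variable I : pred {set E}.
Hypothesis HI : is_matroid I.

Lemma rk_indep (B : {set E}) : I B -> rk I B = #|B|.
Proof.
move=> IB; apply/eqP; rewrite eqn_leq rk_le_card /=; rewrite /rk.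
by apply: (@leq_bigmax_cond _ (fun B' : {set E} => (B' \subset B) && I B') (fun B : {set E} => #|B|)); rewrite subxx IB.
Qed.

Lemma basis (A : {set E}) : exists2 B : {set E}, (B \subset A) && I B & #|B| = rk I A.
Proof.
case: HI => I0 _ _.
have e : rk I A = \max_(B in [pred B : {set E} | (B \subset A) && I B]) #|B|.
  by rewrite /rk; apply: eq_bigl => B; rewrite inE.
have : 0 < #|[pred B : {set E} | (B \subset A) && I B]|.
  by apply/card_gt0P; exists set0; rewrite inE sub0set.
move/(eq_bigmax_cond (fun B : {set E} => #|B|)) => [B HB eB].
by exists B; [rewrite inE in HB | rewrite e eB].
Qed.

Lemma extend (F G : {set E}) : I G -> G \subset F ->
  exists B : {set E}, [/\ G \subset B, B \subset F, I B & #|B| = rk I F].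
Proof.
case: (HI) => _ _ Iaug.
have [t Ht] := ubnP (rk I F - #|G|); elim: t G Ht => // t IH G Ht IG sGF.
case: (ltnP #|G| (rk I F)) => hlt.
- have [D /andP[sDF ID] cD] := basis F.
  have hc : #|G| < #|D| by rewrite cD.
  have [y /setDP[yD yG] Iy] := Iaug G D IG ID hc.
  have h1 : rk I F - #|y |: G| < t by rewrite cardsU1 yG; move: Ht hlt; clear; lia.
  have h2 : y |: G \subset F by rewrite subUset sGF sub1set (subsetP sDF).
  have [B [sB sBF IB cB]] := IH (y |: G) h1 Iy h2.
  by exists B; split => //; apply: subset_trans sB; apply: subsetUr.
- exists G; split => //; apply/eqP; rewrite eqn_leq hlt andbT.
  by rewrite -(rk_indep IG) rk_mono.
Qed.

Lemma flat_strict (F F' : {set E}) : is_flat I F -> F \proper F' -> rk I F < rk I F'.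
Proof.
move=> /forallP fF /properP[sFF' [x xF' xF]].
have := fF x; rewrite xF /= => lt; apply: (leq_trans lt); apply: rk_mono.
by rewrite subUset sFF' sub1set xF'.
Qed.

Lemma flat_full (F : {set E}) : is_flat I F -> rk I F = rk I setT -> F = setT.
Proof.
move=> /forallP fF e; apply/setP => x; rewrite inE; apply/negPn/negP => xF.
have := fF x; rewrite xF /= e => lt.
by have := rk_mono I (subsetT (x |: F)); rewrite leqNgt lt.
Qed.

Definition cl (A : {set E}) := [set x | rk I (x |: A) == rk I A].

Lemma cl_basis (F B : {set E}) : is_flat I F -> B \subset F -> I B -> #|B| = rk I F -> cl B = F.
Proof.
case: (HI) => _ _ Iaug.
move=> /forallP fF sBF IB cB; apply/setP => x; rewrite inE.
case xF: (x \in F).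
- apply/eqP/eqP; rewrite eqn_leq; rewrite (rk_indep IB) cB rk_mono ?subUset ?sub1set ?xF ?sBF //=.
  by rewrite -cB -(rk_indep IB) rk_mono // subsetUr.
- have := fF x; rewrite xF /= => lt.
  have [D /andP[sD ID] cD] := basis (x |: F).
  have hc : #|B| < #|D| by rewrite cD cB.
  have [y /setDP[yD yB] Iy] := Iaug B D IB ID hc.
  have yxF := subsetP sD y yD.
  rewrite in_setU1 in yxF; case/orP: yxF => [/eqP eyx|yF].
  + subst y; rewrite (rk_indep Iy) (rk_indep IB) cardsU1 yB.
    by apply/negbTE; rewrite eqn_leq ltnn.
  + have := rk_mono I (_ : y |: B \subset F).
    rewrite (rk_indep Iy) cardsU1 yB -cB ltnn => /(_ _)/idP; rewrite subUset sub1set yF sBF.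
    by move=> /(_ isT).
Qed.

Let k := rk I setT.
Let U := @uniform_indep E k.

Lemma k_le : k <= #|E|.
Proof. by rewrite /k -cardsT rk_le_card. Qed.

Lemma rkU_small (B : {set E}) : #|B| <= k -> rk U B = #|B|.
Proof.
move=> hB; apply/eqP; rewrite eqn_leq rk_le_card /= /rk.
apply: (@leq_bigmax_cond _ (fun B' : {set E} => (B' \subset B) && U B') (fun B : {set E} => #|B|)); rewrite subxx /=.
have [C sC cC] := ext_set hB k_le.
by apply/existsP; exists C; rewrite cC eqxx sC.
Qed.

Lemma rkU_setT : rk U setT = k.
Proof.
apply/eqP; rewrite eqn_leq; apply/andP; split.
  apply/bigmax_leqP => B /andP[_ /existsP[C /andP[/eqP cC sBC]]].
  by rewrite -cC subset_leq_card.
have h0 : #|(set0 : {set E})| <= k by rewrite cards0.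
have [C _ cC] := ext_set h0 k_le.
by rewrite -{1}cC -rkU_small ?cC // rk_mono ?subsetT.
Qed.

Definition h (B : {set E}) := if #|B| == k then setT else B.
Definition R (F B : {set E}) := [&& B \subset F, I B & #|B| == rk I F].

Lemma sub_h (B : {set E}) : B \subset h B.
Proof. by rewrite /h; case: ifP => _; rewrite ?subsetT ?subxx. Qed.

Lemma R_le (F B : {set E}) : R F B -> #|B| <= k.
Proof. by case/and3P => _ _ /eqP ->; rewrite rk_mono ?subsetT. Qed.

Lemma elt (F B : {set E}) : is_flat I F -> R F B ->
  [/\ is_flat U (h B), rk I F = rk U (h B) & cl (h B) = F].
Proof.
move=> fF RFB; have hk := R_le RFB; move: RFB => /and3P[sBF IB /eqP cB].
rewrite /h; case: ifP => [/eqP cBk|nk].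
- have eF : F = setT by apply: flat_full => //; rewrite -cB cBk.
  split.
  + by apply/forallP => x; rewrite inE.
  + by rewrite rkU_setT -cB.
  + by rewrite eF; apply/setP => x; rewrite !inE setUT eqxx.
- have lt : #|B| < k by rewrite ltn_neqAle nk hk.
  split.
  + apply/forallP => x; apply/implyP => xB.
    rewrite rkU_small ?rkU_small ?cardsU1 ?xB //; by apply: ltnW.
  + by rewrite rkU_small // cB.
  + exact: cl_basis.
Qed.

Lemma stage2 (c b : seq {set E}) : all (is_flat I) c -> all2 R c b ->
  [/\ all (is_flat U) (map h b), map cl (map h b) = c &
      forall j, j < size c -> rk I (nth set0 c j) = rk U (nth set0 (map h b) j)].
Proof.
elim: c b => [|F c IH] [|B b] //=.
move=> /andP[fF fc] /andP[RFB Rcb].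
have [e1 e2 e3] := elt fF RFB; have [i1 i2 i3] := IH b fc Rcb.
split; first by rewrite e1 i1.
  by rewrite e3 i2.
by case=> [|j] //= /i3.
Qed.

Lemma path_h (c b : seq {set E}) (F B : {set E}) : all (is_flat I) (F :: c) -> R F B -> all2 R c b ->
  path (fun A B : {set E} => A \proper B) F c ->
  path (fun A B : {set E} => A \subset B) B b ->
  path (fun A B : {set E} => A \proper B) (h B) (map h b).
Proof.
elim: c b F B => [|F' c IH] [|B' b] F B //=.
move=> /and3P[fF fF' fc] RFB /andP[RFB' Rcb] /andP[pFF' pc] /andP[sBB' pb].
have := IH b F' B'; rewrite /= fF' fc => /(_ isT RFB' Rcb pc pb) ->; rewrite andbT.
have lt := flat_strict fF pFF'.
have hk := R_le RFB'.
move: RFB RFB' => /and3P[_ _ /eqP cB] /and3P[_ _ /eqP cB'].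
have hk' : rk I F' <= k by rewrite -cB'.
have nk : #|B| != k by rewrite neq_ltn cB (leq_trans lt hk').
rewrite {1}/h (negbTE nk) properEcard (subset_trans sBB' (sub_h B')) /=.
by rewrite cB (leq_trans lt) // -cB' subset_leq_card // sub_h.
Qed.

Lemma bases (c : seq {set E}) (G : {set E}) : all (is_flat I) c ->
  sorted (fun A B : {set E} => A \proper B) c -> I G -> G \subset head setT c ->
  exists b, [/\ size b = size c, all2 R c b &
     path (fun A B : {set E} => A \subset B) G b].
Proof.
elim: c G => [|F c IH] G /=; first by move=> *; exists [::].
move=> /andP[fF fc] pc IG sGF.
have [B [sGB sBF IB cB]] := extend IG sGF.
have sBh : B \subset head setT c.
  case: c pc {IH fc} => [|F' c] /=; first by rewrite subsetT.
  by case/andP => /properP[sFF' _] _; apply: subset_trans sBF sFF'.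
have [b [sb Rb pb]] := IH B fc (path_sorted pc) IB sBh.
exists (B :: b); split => /=; first by rewrite sb.
  by rewrite Rb andbT /R sBF IB cB eqxx.
by rewrite sGB pb.
Qed.

Definition Pg (c g : seq {set E}) :=
  [/\ flat_chain U g, size g = size c,
      (forall j, j < size c -> rk I (nth set0 c j) = rk U (nth set0 g j)) &
      map cl g = c].

Lemma exists_g (c : seq {set E}) : flat_chain I c -> exists g, Pg c g.
Proof.
case: (HI) => I0 _ _.
case/and3P => sz fl srt.
have [b [sb Rb pb]] := bases fl srt I0 (sub0set _).
have [a1 a2 a3] := stage2 fl Rb.
exists (map h b); split => //; last by rewrite size_map.
rewrite /flat_chain size_map sb sz a1 /=.
case: c sz fl srt sb Rb {a1 a2 a3} => [|F c] // _ fl srt.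
case: b pb => [|B b] //= /andP[_ pb] _ /andP[RFB Rcb].
exact: (path_h fl RFB Rcb srt pb).
Qed.

End M.

Theorem lemma3p36 (E : finType) (I : pred {set E}) (k n : nat) :
  #|E| = n -> is_matroid I -> loopless I -> rk I [set: E] = k ->
  exists f : seq {set E} -> seq {set E},
    {in flat_chain I &, injective f} /\
    (forall c, flat_chain I c ->
       [/\ flat_chain (@uniform_indep E k) (f c),
           size (f c) = size c &
           forall j, j < size c ->
             rk I (nth set0 c j) = rk (@uniform_indep E k) (nth set0 (f c) j)]).
Proof.
move=> _ HI _ Hk; subst k.
pose f c := ClassicalEpsilon.epsilon (inhabits [::]) (Pg I c).
have HP c : flat_chain I c -> Pg I c (f c).
  by move=> hc; apply: ClassicalEpsilon.epsilon_spec; apply: exists_g.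
exists f; split.
  move=> c1 c2 h1 h2 e.
  have [_ _ _ <-] := HP c1 h1; have [_ _ _ <-] := HP c2 h2; by rewrite e.
by move=> c hc; have [? ? ? _] := HP c hc.
Qed.
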